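(* Let $p>3$ be a prime, $e$ a positive integer, $q=p^e$, and $k$ an integer with $1\le k\le e$. Then $D_{p^k,3}(1,x)$ is not a permutation polynomial of $\mathbb{F}_q$.
   Context: For $n\ge 1$ and $a\in\mathbb{F}_q$, $D_{n,3}(a,x)=\sum_{i=0}^{\lfloor n/2\rfloor}\frac{n-3i}{n-i}\binom{n-i}{i}(-x)^i a^{n-2i}\in\mathbb{F}_q[x]$, where each coefficient $\frac{n-3i}{n-i}\binom{n-i}{i}$ is an integer read modulo $p$; and $D_{0,3}(a,x)=-1$. A polynomial $g\in\mathbb{F}_q[x]$ is a permutation polynomial of $\mathbb{F}_q$ if $c\mapsto g(c)$ is a bijection $\mathbb{F}_q\to\mathbb{F}_q$. *)

(* Defs.v *)
From HB Require Import structures.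
From mathcomp Require Import all_boot all_order all_algebra all_field.
Set Implicit Arguments. Unset Strict Implicit. Unset Printing Implicit Defensive.
Import GRing.Theory.
Local Open Scope ring_scope.

(* The integer coefficient (n-3i)/(n-i) * C(n-i,i) of D_{n,3}; the division
   is exact for 0 <= i <= n/2, n >= 1, so we compute it with divz. *)
Definition dickson3_coef (n i : nat) : int :=
  (((n%:Z - 3 * i%:Z) * ('C(n - i, i))%:Z) %/ (n - i)%:Z)%Z.

Definition dickson3 (R : nzRingType) (n : nat) (a : R) : {poly R} :=
  if n is 0 then -1
  else \sum_(0 <= i < n./2.+1)
         ((dickson3_coef n i)%:~R * a ^+ (n - i.*2)) *: (- 'X) ^+ i.

Definition is_perm_poly (F : finFieldType) (g : {poly F}) : Prop :=
  bijective (fun c : F => g.[c]).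

(* Main.v *)
Require Import Defs.
From HB Require Import structures.
From mathcomp Require Import all_boot all_order all_algebra all_field.
From mathcomp Require Import zify ring.
Set Implicit Arguments. Unset Strict Implicit. Unset Printing Implicit Defensive.
Import GRing.Theory.
Local Open Scope ring_scope.

Lemma binP n i : 'C(n.+1 - i, i.+1) = ('C(n - i, i.+1) + 'C(n - i, i))%N.
Proof.
case: (leqP i n) => h; first by rewrite subSn // binS.
have -> : (n.+1 - i = 0)%N by lia.
have -> : (n - i = 0)%N by lia.
rewrite !bin0n; case: i h => //.
Qed.

Definition ee (R : nzRingType) (y : R) n :=
  \sum_(0 <= i < n.+1) ('C(n - i, i))%:R * y ^+ i.

Lemma ee_rec (R : comNzRingType) (y : R) n : ee y n.+2 = ee y n.+1 + y * ee y n.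
Proof.
rewrite /ee big_nat_recl // [in X in _ = X + _]big_nat_recl //.
rewrite !subn0 !bin0.
under eq_bigr => i _ do rewrite subSS binP natrD mulrDl.
rewrite big_split /= -addrA; congr (_ + _).
under [X in _ = X + _]eq_bigr => i _ do rewrite subSS.
rewrite big_nat_recr //= [X in _ + X]big_nat_recr //= .
have -> : (n - n.+1 = 0)%N by lia.
rewrite !bin0n /= !mul0r !addr0.
congr (_ + _); rewrite mulr_sumr; apply: eq_bigr => i _.
by rewrite exprS mulrCA.
Qed.

Lemma coefP n i : (i.+1 < n)%N ->
  dickson3_coef n i.+1 = ('C(n - i.+1, i.+1))%:Z - 2 * ('C(n - i.+2, i))%:Z.
Proof.
move=> h; have [m ->] : exists m, n = (m.+1 + i.+1)%N by exists (n - i.+2)%N; lia.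
rewrite /dickson3_coef.
have -> : (m.+1 + i.+1 - i.+1 = m.+1)%N by lia.
have -> : (m.+1 + i.+1 - i.+2 = m)%N by lia.
have hb := congr1 (fun x : nat => x%:Z) (mul_bin_diag m.+1 i).
rewrite /= !PoszM in hb.
set C1 := ('C(m.+1, i.+1))%:Z in hb *; set C0 := ('C(m, i))%:Z in hb *.
have -> : ((m.+1 + i.+1)%N%:Z - 3 * (i.+1)%:Z) * C1 = (m.+1)%:Z * (C1 - 2 * C0).
  apply/eqP; rewrite -subr_eq0.
  have -> : ((m.+1 + i.+1)%N%:Z - 3 * (i.+1)%:Z) * C1 - (m.+1)%:Z * (C1 - 2 * C0)
     = 2 * ((m.+1)%:Z * C0 - (i.+1)%:Z * C1) by rewrite PoszD; ring.
  by rewrite hb subrr mulr0.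
by rewrite mulKz.
Qed.

Lemma dick_eval (F : fieldType) m (c : F) :
  (dickson3 m.+2 (1 : F)).[c] = ee (-c) m.+2 - 2 * (-c) * ee (-c) m.
Proof.
rewrite /dickson3 horner_sum.
under eq_bigr => i _ do rewrite hornerZ horner_exp hornerN hornerX expr1n mulr1.
set f := fun i => (dickson3_coef m.+2 i)%:~R * (- c) ^+ i.
have hle : (m.+2./2.+1 <= m.+2)%N.
  by rewrite ltnS leq_half_double -addnn; lia.
rewrite (_ : \sum_(0 <= i < m.+2./2.+1) _ = \sum_(0 <= i < m.+2) f i); last first.
  rewrite (big_cat_nat (n:=m.+2./2.+1) (p:=m.+2)) //= -[LHS]addr0; congr (_ + _).
  symmetry; rewrite big_nat; apply: big1.
  move=> i /andP[hi1 hi2]; rewrite /f /dickson3_coef bin_small ?mulr0 ?div0z ?mul0r //.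
  have := odd_double_half m; have : (odd m <= 1)%N by case: odd.
  rewrite -addnn; lia.
rewrite big_nat_recl // /f {1}/dickson3_coef subn0 bin0 mulr0 subr0 mulr1 [X in (X %/ _)%Z]mulr1 divzz /=.
under eq_big_nat => i /andP[_ hi] do rewrite coefP // rmorphB rmorphM /= !subSS -!pmulrn.
rewrite /ee [X in _ = X - _]big_nat_recl // subn0 bin0 expr0 mulr1 -!pmulrn -addrA.
congr (_ + _).
rewrite [X in _ = X - _]big_nat_recr //= subnn bin0n /= mul0r addr0.
under eq_bigr => i _ do rewrite mulrBl.
rewrite sumrB; congr (_ - _).
rewrite mulr_sumr; apply: eq_bigr => i _.
by rewrite exprS; ring.
Qed.

Lemma ee_closed (F : fieldType) (y : F) : 4 * y = 3 ->
  forall n, 4 * 2 ^+ n * ee y n = 3 * 3 ^+ n + (-1) ^+ n.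
Proof.
move=> hy.
suff H : forall n, 4 * 2 ^+ n * ee y n = 3 * 3 ^+ n + (-1) ^+ n /\
                   4 * 2 ^+ n.+1 * ee y n.+1 = 3 * 3 ^+ n.+1 + (-1) ^+ n.+1.
  by move=> n; case: (H n).
elim=> [|n [IH1 IH2]].
  rewrite /ee big_nat1 big_nat_recr //= big_nat1 /= !expr0 !expr1 !mulr1 bin0n /=.
  rewrite subnn bin0n /= mul0r addr0 mulr1; split; ring.
split=> //.
rewrite ee_rec.
have -> : 4 * 2 ^+ n.+2 * (ee y n.+1 + y * ee y n) =
  2 * (4 * 2 ^+ n.+1 * ee y n.+1) + (4 * y) * (4 * 2 ^+ n * ee y n) by rewrite !exprS; ring.
rewrite IH1 IH2 hy !exprS; ring.
Qed.

Lemma ee0 (F : fieldType) n : ee (0 : F) n = 1.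
Proof.
rewrite /ee big_nat_recl // big1 ?addr0 ?subn0 ?bin0 ?expr0 ?mulr1 // => i _.
by rewrite expr0n /= mulr0.
Qed.

Theorem corollary2p8 (p e k : nat) (F : finFieldType) :
  prime p -> (3 < p)%N -> (0 < e)%N -> (1 <= k <= e)%N -> #|F| = (p ^ e)%N ->
  ~ is_perm_poly (dickson3 (p ^ k) (1 : F)).
Proof.
move=> pp p3 e0 /andP[k1 ke] cardF.
have ch : p \in [pchar F] := card_finPcharP cardF pp.
have nz : forall j, (0 < j < p)%N -> (j%:R : F) != 0.
  move=> j /andP[j0 jp]; rewrite -(dvdn_pcharf ch); apply/negP => /dvdn_leq.
  move=> h; have := h j0; lia.
have frob : forall l j, (j%:R : F) ^+ (p ^ l) = j%:R.
  elim=> [|l IH] j; first by rewrite expn0 expr1.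
  by rewrite expnS exprM -(pFrobenius_autE ch) pFrobenius_aut_nat IH.
have oddp : odd p by case: (even_prime pp) => // h; rewrite h in p3.
have oddn : odd (p ^ k) by rewrite oddX oddp orbT.
have [m hm] : exists m, (p ^ k = m.+2)%N.
  exists (p ^ k - 2)%N; have : (p ^ 1 <= p ^ k)%N by exact: leq_pexp2l (prime_gt0 pp) k1.
  rewrite expn1; lia.
have n2 : (2 : F) != 0 by apply: (nz 2%N); lia.
have n3 : (3 : F) != 0 by apply: (nz 3%N); lia.
have n4 : (4 : F) != 0 by rewrite (_ : 4 = 2 * 2) ?mulf_neq0 //; ring.
set y : F := 3 / 4.
have hy : 4 * y = 3 by rewrite /y mulrC mulfVK.
have D0 : (dickson3 (p ^ k) (1 : F)).[0] = 1.
  by rewrite hm dick_eval oppr0 !ee0 mulr0 mul0r subr0.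
have D1 : (dickson3 (p ^ k) (1 : F)).[- y] = 1.
  rewrite hm dick_eval opprK.
  have H := ee_closed hy.
  have h2 : (2 : F) ^+ (p ^ k) = 2 by exact: (frob k 2%N).
  have h3 : (3 : F) ^+ (p ^ k) = 3 by exact: (frob k 3%N).
  have hn : (-1 : F) ^+ (p ^ k) = -1 by rewrite -signr_odd oddn.
  rewrite hm in h2 h3 hn oddn.
  apply: (mulfI (_ : 4 * 2 ^+ m.+2 != 0)); first by rewrite mulf_neq0 // expf_neq0.
  have -> : 4 * 2 ^+ m.+2 * (ee y m.+2 - 2 * y * ee y m) =
     4 * 2 ^+ m.+2 * ee y m.+2 - 2 * (4 * y) * (4 * 2 ^+ m * ee y m).
    by rewrite !exprS; ring.
  rewrite !H hy h2.
  have e3 : 3 ^+ m = 3 / 9 :> F.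
    apply: (mulIf (_ : (9 : F) != 0)); first by rewrite (_ : 9 = 3 * 3) ?mulf_neq0 //; ring.
    by rewrite mulfVK; [rewrite -[RHS]h3 !exprS; ring | rewrite (_ : 9 = 3 * 3) ?mulf_neq0 //; ring].
  have em : (-1) ^+ m = -1 :> F by rewrite -[RHS]hn !exprS; ring.
  rewrite h3 hn e3 em; field.
  by rewrite (_ : 9 = 3 * 3) ?mulf_neq0 //; ring.
move/bij_inj => inj.
have := inj 0 (- y); rewrite /= D0 D1 => /(_ erefl) /eqP.
by rewrite eq_sym oppr_eq0 /y mulf_eq0 invr_eq0 (negbTE n3) (negbTE n4).
Qed.
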